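(* Assume (H1) and (H2) from the context hold, let $c>c^*$, and let $\gamma\in(1,2)$ satisfy $\Phi(\gamma\Lambda_c)<c$ and $M_i(\gamma\Lambda_c)>0$ for $i=1,\dots,N$. Then for each $i=1,\dots,N$, $$\frac{M_i(\Lambda_c)}{(\lambda_{1i}+\Lambda_c)\nu^i_{\Lambda_c}}+\frac{M_i(\Lambda_c)}{(\lambda_{2i}-\Lambda_c)\nu^i_{\Lambda_c}}-\frac{M_i(\gamma\Lambda_c)}{(\lambda_{1i}+\gamma\Lambda_c)\nu^i_{\gamma\Lambda_c}}-\frac{M_i(\gamma\Lambda_c)}{(\lambda_{2i}-\gamma\Lambda_c)\nu^i_{\gamma\Lambda_c}}>0.$$
   Context: Let $N\ge1$ and $D=\mathrm{diag}(d_1,\dots,d_N)$ with $d_i>0$. Vector inequalities are componentwise; $u\gg0$ means all components positive; $[0,r]=\{u:0\le u\le r\}$. (H1) - $k^+\gg0$; $f:[0,k^+]\to\mathbb{R}^N$ is continuous and piecewise twice continuously differentiable; solutions of $u_t=Du_{xx}+f(u)$ with data continuous in $[0,k^+]$ exist globally and stay in $[0,k^+]$. - $0\ll k^-\le k\le k^+$; continuous piecewise $C^2$ maps $f^\pm:[0,k^\pm]\to\mathbb{R}^N$ satisfy $f^-\le f\le f^+$ on $[0,k^+]$. - $f(0)=f(k)=0$, $f^\pm(0)=f^\pm(k^\pm)=0$, with no other positive equilibria between $0$ and $k$, respectively $k^\pm$. - $f^\pm$ are cooperative on $[0,k^\pm]$ and share with $f$ the Jacobian $f'(0)$ at $0$.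 (H2) - $A_\lambda=(a^{ij}_\lambda)=\mathrm{diag}(d_i\lambda^2)+f'(0)$ is block lower triangular for $\lambda>0$, with irreducible or $1\times1$ zero diagonal blocks. - Its first block has positive principal eigenvalue $\Psi(A_\lambda)$ (where $\Psi(A)=\rho(A+\alpha I)-\alpha$, $A+\alpha I\ge0$), strictly larger than those of the other blocks. - An eigenvector $\nu_\lambda=(\nu^i_\lambda)\gg0$ for $\Psi(A_\lambda)$ exists and is continuous in $\lambda$. Speeds. $\Phi(\lambda)=\Psi(A_\lambda)/\lambda$ and $c^*=\inf_{\lambda>0}\Phi$. For $c>c^*$, $\Lambda_c$ is the smallest positive solution of $\Phi(\lambda)=c$. Constants. $\beta>\max\{|\partial_if_j(u)|:u\in[0,k^+]\}$ is a fixed, sufficiently large constant. Set $\lambda_{1i}=\frac{-c+\sqrt{c^2+4\beta d_i}}{2d_i}$ and $\lambda_{2i}=\frac{c+\sqrt{c^2+4\beta d_i}}{2d_i}$, with $\lambda_{2i}>\lambda_{1i}>2\Lambda_c$. The quantity $M_i$. $M_i(\lambda)=\beta\nu^i_\lambda-\nu^i_\lambda d_i\lambda^2+\sum_{j=1}^N\nu^j_\lambda a^{ij}_\lambda$. *)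

(* Defs.v *)
From HB Require Import structures.
From mathcomp Require Import all_boot all_order all_algebra.
From mathcomp Require Import all_classical all_reals all_analysis.
From mathcomp Require Import complex.
Set Implicit Arguments.
Unset Strict Implicit.
Unset Printing Implicit Defensive.
Import Order.TTheory GRing.Theory Num.Theory.
Import numFieldNormedType.Exports.
Local Open Scope ring_scope.
Local Open Scope classical_set_scope.

Section Defs.
Variable R : realType.

(* States u in R^N are row vectors 'rV[R]_N; u 0 i is the i-th component. *)

Definition box (N : nat) (a b : 'rV[R]_N) : set 'rV[R]_N :=
  [set u | forall i, a 0 i <= u 0 i <= b 0 i].

Definition vpos (N : nat) (u : 'rV[R]_N) : Prop := forall i, 0 < u 0 i.

Definition vle (N : nat) (u v : 'rV[R]_N) : Prop := forall i, u 0 i <= v 0 i.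

Definition spec_rad (n : nat) (B : 'M[R]_n) : R :=
  sup [set Normc.normc z | z in
        [set z : R[i] | eigenvalue (map_mx (real_complex R) B) z]].

(* Psi(A) = rho(A + alpha I) - alpha, with alpha chosen large enough that the
   diagonal of A + alpha I is nonnegative (for a matrix with nonnegative
   off-diagonal entries this makes A + alpha I >= 0). *)
Definition Psi (n : nat) (A : 'M[R]_n) : R :=
  let alpha := \sum_(i < n) `|A i i| in spec_rad (A + alpha%:M) - alpha.

Definition submx_on (n : nat) (A : 'M[R]_n) (S : {set 'I_n}) : 'M[R]_#|S| :=
  \matrix_(i, j) A (enum_val i) (enum_val j).

Definition irreducible_on (n : nat) (A : 'M[R]_n) (S : {set 'I_n}) : Prop :=
  forall T : {set 'I_n}, T \proper S -> T != finset.set0 ->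
    exists i j, [/\ i \in T, j \in S :\: T & A i j != 0].

Definition zero1x1_on (n : nat) (A : 'M[R]_n) (S : {set 'I_n}) : Prop :=
  #|S| = 1%N /\ forall i, i \in S -> A i i = 0.

Definition block (n : nat) (blk : 'I_n -> nat) (k : nat) : {set 'I_n} :=
  [set i | blk i == k].

Definition block_lower_tri (n : nat) (A : 'M[R]_n) (blk : 'I_n -> nat) : Prop :=
  (forall i j : 'I_n, (i <= j)%N -> (blk i <= blk j)%N) /\
  (forall i j : 'I_n, (blk i < blk j)%N -> A i j = 0) /\
  (forall k, block blk k != finset.set0 ->
     irreducible_on A (block blk k) \/ zero1x1_on A (block blk k)).

(* f is cooperative on the box [0,r]: f_i is nondecreasing in u_j, j <> i *)
Definition cooperative (N : nat) (f : 'rV[R]_N -> 'rV[R]_N) (r : 'rV[R]_N) : Prop :=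
  forall u v i, box 0 r u -> box 0 r v -> vle u v -> u 0 i = v 0 i ->
    f u 0 i <= f v 0 i.

(* J is the Jacobian of F at 0, the derivative being taken within [0,r]:
   F u = F 0 + J u + o(|u|) for u in [0,r] (J acts on column vectors,
   J i j = d f_i / d u_j (0)) *)
Definition jacobian_at0 (N : nat) (F : 'rV[R]_N -> 'rV[R]_N) (r : 'rV[R]_N)
    (J : 'M[R]_N) : Prop :=
  forall e : R, 0 < e -> exists2 dl : R, 0 < dl &
    forall u, box 0 r u -> `|u| < dl -> `|F u - F 0 - u *m J^T| <= e * `|u|.

(* u (t, x) is a classical solution on t >= 0 of u_t = D u_xx + f(u), u(0,.) = u0 *)
Definition rd_solution (N : nat) (d : 'I_N -> R) (f : 'rV[R]_N -> 'rV[R]_N)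
    (u0 : R -> 'rV[R]_N) (u : R -> R -> 'rV[R]_N) : Prop :=
  [/\ (forall x, u 0 x = u0 x),
      {within [set p : R * R | 0 <= p.1], continuous (fun p => u p.1 p.2)} &
      forall (t x : R), 0 < t -> forall i, exists ut uxx : R,
        [/\ is_derive t (1 : R) (fun s => u s x 0 i) ut,
            exists ux : R -> R,
              (forall y : R, is_derive y (1 : R) (fun z => u t z 0 i) (ux y)) /\
              is_derive x (1 : R) ux uxx
          & ut = d i * uxx + f (u t x) 0 i]].

Definition global_invariant (N : nat) (d : 'I_N -> R) (f : 'rV[R]_N -> 'rV[R]_N)
    (kp : 'rV[R]_N) : Prop :=
  forall u0 : R -> 'rV[R]_N, continuous u0 -> (forall x, box 0 kp (u0 x)) ->
    exists u, rd_solution d f u0 u /\ forall t x, 0 <= t -> box 0 kp (u t x).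

Definition Alam (N : nat) (d : 'I_N -> R) (J : 'M[R]_N) (l : R) : 'M[R]_N :=
  diag_mx (\row_i (d i * l ^+ 2)) + J.

Definition Phi (N : nat) (d : 'I_N -> R) (J : 'M[R]_N) (l : R) : R :=
  Psi (Alam d J l) / l.

Definition cstar (N : nat) (d : 'I_N -> R) (J : 'M[R]_N) : R :=
  inf [set Phi d J l | l in `]0, +oo[].

Definition Mi (N : nat) (d : 'I_N -> R) (J : 'M[R]_N) (nu : R -> 'cV[R]_N)
    (beta l : R) (i : 'I_N) : R :=
  beta * nu l i 0 - nu l i 0 * d i * l ^+ 2
  + \sum_(j < N) nu l j 0 * Alam d J l i j.

Definition lam1 (N : nat) (d : 'I_N -> R) (beta c : R) (i : 'I_N) : R :=
  (- c + Num.sqrt (c ^+ 2 + 4 * beta * d i)) / (2 * d i).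

Definition lam2 (N : nat) (d : 'I_N -> R) (beta c : R) (i : 'I_N) : R :=
  (c + Num.sqrt (c ^+ 2 + 4 * beta * d i)) / (2 * d i).

End Defs.

(* Main.v *)
Require Import Defs.
From HB Require Import structures.
From mathcomp Require Import all_boot all_order all_algebra.
From mathcomp Require Import all_classical all_reals all_analysis.
From mathcomp Require Import complex.
Import Order.TTheory GRing.Theory Num.Theory.
Import numFieldNormedType.Exports.
Local Open Scope ring_scope.
Local Open Scope classical_set_scope.

From mathcomp Require Import ring lra.

Lemma key (R : rcfType) (d c beta x y Px Py : R) :
 0<d -> 0<x -> x<y -> y < 2*x ->
 2*x < (-c + Num.sqrt (c^+2+4*beta*d))/(2*d) ->
 (-c + Num.sqrt (c^+2+4*beta*d))/(2*d) < (c + Num.sqrt (c^+2+4*beta*d))/(2*d) ->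
 Px = beta - d*x^+2 + c*x -> Py < beta - d*y^+2 + c*y -> 0 < Py ->
 0 < Px/((-c + Num.sqrt (c^+2+4*beta*d))/(2*d)+x) + Px/((c + Num.sqrt (c^+2+4*beta*d))/(2*d)-x)
   - Py/((-c + Num.sqrt (c^+2+4*beta*d))/(2*d)+y) - Py/((c + Num.sqrt (c^+2+4*beta*d))/(2*d)-y).
Proof.
move=> d0 x0 xy y2 h1 h12 -> hy py.
set s := Num.sqrt _ in h1 h12 *.
set l1 := (-c + s)/(2*d) in h1 h12 *; set l2 := (c + s)/(2*d) in h1 h12 *.
have d2 : 2*d != 0 by apply: lt0r_neq0; lra.
have El1 : l1 * (2*d) = s - c by rewrite /l1 mulfVK //; lra.
have El2 : l2 * (2*d) = s + c by rewrite /l2 mulfVK //; lra.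
have c0 : 0 < c.
  have h : 0 < (l2-l1)*(2*d) by apply: mulr_gt0; lra.
  have : (l2-l1)*(2*d) = l2*(2*d) - l1*(2*d) by ring.
  lra.
have s0 : 0 < s.
  have h : 0 < l1*(2*d) by apply: mulr_gt0; lra.
  lra.
have disc : 0 < c^+2+4*beta*d by rewrite -sqrtr_gt0.
have Es : s^+2 = c^+2+4*beta*d by rewrite sqr_sqrtr // ltW.
have Eb : beta = (s^+2 - c^+2)/(4*d).
  rewrite Es; field; apply: lt0r_neq0; lra.
have Q : forall l, d * ((l1 + l) * (l2 - l)) = beta - d * l ^+ 2 + c * l.
  move=> l; rewrite Eb /l1 /l2; field; apply: lt0r_neq0; lra.
have a1 : 0 < l1 + x by lra.
have a2 : 0 < l2 - x by lra.
have b1 : 0 < l1 + y by lra.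
have b2 : 0 < l2 - y by lra.
rewrite -Q.
have -> : d * ((l1 + x) * (l2 - x)) / (l1 + x) + d * ((l1 + x) * (l2 - x)) / (l2 - x) -
  Py / (l1 + y) - Py / (l2 - y) = (l1+l2) * (d - Py/((l1+y)*(l2-y))).
  field; rewrite ?lt0r_neq0 //.
apply: mulr_gt0; first lra.
rewrite subr_gt0 ltr_pdivrMr; last exact: mulr_gt0.
by rewrite -Q in hy.
Qed.

Theorem lemma6p2
  (R : realType) (N : nat) (HN : (0 < N)%N)
  (d : 'I_N -> R) (hd : forall i, 0 < d i)
  (f fm fp : 'rV[R]_N -> 'rV[R]_N) (km k kp : 'rV[R]_N) (J : 'M[R]_N)
  (* (H1) *)
  (Hkp : vpos kp)
  (Hfc : {within box 0 kp, continuous f})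
  (Hglob : global_invariant d f kp)
  (Hkm : vpos km) (Hkmk : vle km k) (Hkkp : vle k kp)
  (Hfmc : {within box 0 km, continuous fm})
  (Hfpc : {within box 0 kp, continuous fp})
  (Hfmf : forall u, box 0 km u -> vle (fm u) (f u))
  (Hffp : forall u, box 0 kp u -> vle (f u) (fp u))
  (Hf0 : f 0 = 0) (Hfk : f k = 0)
  (Hfm0 : fm 0 = 0) (Hfmk : fm km = 0)
  (Hfp0 : fp 0 = 0) (Hfpk : fp kp = 0)
  (Hfeq : forall u, box 0 k u -> f u = 0 -> u = 0 \/ u = k)
  (Hfmeq : forall u, box 0 km u -> fm u = 0 -> u = 0 \/ u = km)
  (Hfpeq : forall u, box 0 kp u -> fp u = 0 -> u = 0 \/ u = kp)
  (Hcoopm : cooperative fm km) (Hcoopp : cooperative fp kp)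
  (HJ : jacobian_at0 f kp J) (HJm : jacobian_at0 fm km J)
  (HJp : jacobian_at0 fp kp J)
  (* (H2) *)
  (blk : 'I_N -> nat) (nu : R -> 'cV[R]_N)
  (Hblk : forall l : R, 0 < l -> block_lower_tri (Alam d J l) blk)
  (Hblk0 : block blk 0 != finset.set0)
  (Hpsi : forall l : R, 0 < l ->
     [/\ 0 < Psi (Alam d J l),
         Psi (submx_on (Alam d J l) (block blk 0)) = Psi (Alam d J l) &
         forall kk : nat, kk <> 0%N -> block blk kk != finset.set0 ->
           Psi (submx_on (Alam d J l) (block blk kk)) < Psi (Alam d J l)])
  (Hnu : forall l : R, 0 < l ->
     (forall i, 0 < nu l i 0) /\ Alam d J l *m nu l = Psi (Alam d J l) *: nu l)
  (Hnuc : forall i, {within `]0, +oo[, continuous (fun l => nu l i 0)})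
  (* constants and speeds *)
  (beta c Lam gam : R)
  (Hbeta : forall (u : 'rV[R]_N) (i j : 'I_N) (g : R), box 0 kp u ->
     is_derive u (delta_mx 0 i) (fun v => f v 0 j) g -> `|g| < beta)
  (Hc : cstar d J < c)
  (HLam : [/\ 0 < Lam, Phi d J Lam = c &
             forall l, 0 < l < Lam -> Phi d J l <> c])
  (Hlam : forall i, 2 * Lam < lam1 d beta c i /\ lam1 d beta c i < lam2 d beta c i)
  (Hgam : 1 < gam < 2)
  (HgamPhi : Phi d J (gam * Lam) < c)
  (HgamM : forall i, 0 < Mi d J nu beta (gam * Lam) i) :
  forall i : 'I_N,
    0 < Mi d J nu beta Lam i / ((lam1 d beta c i + Lam) * nu Lam i 0)
        + Mi d J nu beta Lam i / ((lam2 d beta c i - Lam) * nu Lam i 0)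
        - Mi d J nu beta (gam * Lam) i
            / ((lam1 d beta c i + gam * Lam) * nu (gam * Lam) i 0)
        - Mi d J nu beta (gam * Lam) i
            / ((lam2 d beta c i - gam * Lam) * nu (gam * Lam) i 0).
Proof.

Proof.
move=> i.
case: HLam => L0 PhiL _.
case/andP: Hgam => g1 g2.
have y0 : 0 < gam * Lam by apply: mulr_gt0 => //; lra.
have Mform : forall l, 0 < l ->
  Mi d J nu beta l i = nu l i 0 * (beta - d i * l ^+ 2 + Psi (Alam d J l)).
  move=> l l0; case: (Hnu l l0) => _ E.
  have : (Alam d J l *m nu l) i 0 = (Psi (Alam d J l) *: nu l) i 0 by rewrite E.
  rewrite !mxE => Es.
  rewrite /Mi (eq_bigr (fun j => Alam d J l i j * nu l j 0)); last by move=> j _; rewrite mulrC.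
  rewrite Es; ring.
have PsiL : Psi (Alam d J Lam) = c * Lam.
  by rewrite -PhiL /Phi mulfVK // lt0r_neq0.
have PsiY : Psi (Alam d J (gam * Lam)) < c * (gam * Lam).
  by move: HgamPhi; rewrite /Phi ltr_pdivrMr.
have nx := (Hnu Lam L0).1 i.
have ny := (Hnu (gam * Lam) y0).1 i.
have Py0 : 0 < beta - d i * (gam * Lam) ^+ 2 + Psi (Alam d J (gam * Lam)).
  have := HgamM i; rewrite (Mform _ y0) pmulr_rgt0 //.
case: (Hlam i) => h1 h12.
rewrite !Mform //.
have cancel : forall (n P q : R), 0 < n -> n * P / (q * n) = P / q.
  move=> n P q n0; rewrite [q * n]mulrC invfM mulrA [n * P]mulrC mulfK //.
  exact: lt0r_neq0.
rewrite !cancel //.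
move: h1 h12; rewrite /lam1 /lam2 => h1 h12.
have yx : Lam < gam * Lam by rewrite ltr_pMl.
have y2 : gam * Lam < 2 * Lam by rewrite ltr_pM2r.
apply: key => //.
- by rewrite PsiL.
- lra.
Qed.
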